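(* Let $G=(V,E)$ be a finite simple strongly connected directed graph with a fixed total order on $V$, and let $\mathbf b$ be a spanning tree of $G$. Let $Z=\phi(\mathbf b)$. Then the set of vertices erased when running the exploration algorithm on $\mathbf b$ coincides with the set of boundary points of $\mathbf b$, i.e. the set of vertices $u\in V\setminus Z$ having an outgoing edge with target in $Z$.
   Context: A spanning tree of $G$ is a subgraph on all vertices with no cycle, one vertex (root) of outdegree $0$ and all others of outdegree $1$. Exploration algorithm (depends on the fixed total order of $V$). Input: a spanning tree $\mathbf a$ rooted at $v$. Initialize $A=\{v\}$, $F=\{e: s(e)\neq v\}$, $\mathbf L$ = FIFO list of edges with target $v$, by increasing source. While $\mathbf L$ is nonempty, take its first edge $e$, with source $w$: if $e\in\mathbf a$, add $w$ to $A$, delete from $\mathbf L$ (and $F$) all edges with source $w$, and append to $\mathbf L$ all edges of $F$ with target $w$ by increasing source; otherwise delete from $\mathbf L$ and $F$ all edges with source or target $w$, and $w$ is said to be erased. At the end $\phi(\mathbf a)=A$. *)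

(* Defs.v *)
From mathcomp Require Import all_boot all_order.
Set Implicit Arguments. Unset Strict Implicit. Unset Printing Implicit Defensive.
Import Order.TTheory.
Local Open Scope order_scope.

Section Exploration.
Variables (d : Order.disp_t) (V : finOrderType d).

(* A directed graph on V is a relation G : rel V; the edge e = (s,t) has
   source e.1 and target e.2.  Simple = no loops (and at most one edge per
   ordered pair, automatic for a relation). *)
Definition simple_digraph (G : rel V) : Prop := irreflexive G.

Definition strongly_connected (G : rel V) : Prop := forall x y, connect G x y.

Definition outdeg (a : rel V) (x : V) : nat := #|[pred y | a x y]|.

Definition spanning_tree (G a : rel V) (v : V) : Prop :=
  [/\ subrel a G,
      outdeg a v = 0%N,
      (forall x, x != v -> outdeg a x = 1%N) &
      (forall x y, a x y -> ~~ connect a y x)].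

Definition edges (G : rel V) : seq (V * V) :=
  [seq e <- enum {: V * V} | G e.1 e.2].

Definition by_source (s : seq (V * V)) : seq (V * V) :=
  sort (fun e f : V * V => e.1 <= f.1) s.

(* One run of the exploration algorithm; returns (A, erased vertices).
   fuel bounds the number of iterations of the while loop. *)
Fixpoint explore_aux (a : rel V) (fuel : nat) (A : seq V) (F L : seq (V * V))
    (Er : seq V) : seq V * seq V :=
  match fuel with
  | 0 => (A, Er)
  | k.+1 =>
    match L with
    | [::] => (A, Er)
    | e :: L' =>
      let w := e.1 in
      if a w e.2 then
        let F' := [seq f <- F | f.1 != w] in
        let L'' := [seq f <- L' | f.1 != w] ++
                   by_source [seq f <- F' | f.2 == w] in
        explore_aux a k (w :: A) F' L'' Er
      else
        let F' := [seq f <- F | (f.1 != w) && (f.2 != w)] in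
        let L'' := [seq f <- L' | (f.1 != w) && (f.2 != w)] in
        explore_aux a k A F' L'' (w :: Er)
    end
  end.

(* Each iteration removes the head of L, and an edge is appended to L only
   when its target is added to A (which happens at most once per vertex),
   so the loop runs at most |E| <= |V|^2 times: the fuel below is enough. *)
Definition explore (G a : rel V) (v : V) : seq V * seq V :=
  explore_aux a (#|V| * #|V|)%N.+1 [:: v]
    [seq e <- edges G | e.1 != v]
    (by_source [seq e <- edges G | e.2 == v]) [::].

Definition phi (G a : rel V) (v : V) : {set V} :=
  [set x | x \in (explore G a v).1].

Definition erased (G a : rel V) (v : V) : {set V} :=
  [set x | x \in (explore G a v).2].

Definition boundary (G : rel V) (Z : {set V}) : {set V} :=
  [set u | (u \notin Z) && [exists z in Z, G u z]].

End Exploration.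

(* Main.v *)
Require Import Defs.
From mathcomp Require Import all_boot all_order.
Set Implicit Arguments. Unset Strict Implicit. Unset Printing Implicit Defensive.

Section Pf.
Variables (d : Order.disp_t) (V : finOrderType d) (G b : rel V).

Definition Inv (A Er : seq V) (F L : seq (V * V)) : Prop :=
 [/\ (forall x, x \in Er -> x \notin A /\ exists2 z, z \in A & G x z),
     (forall e, e \in L -> [/\ G e.1 e.2, e.2 \in A, e.1 \notin A & e.1 \notin Er]),
     (forall e, e \in F -> [/\ G e.1 e.2, e.1 \notin A & e.1 \notin Er]),
     (forall u z, G u z -> z \in A -> u \notin A -> u \notin Er -> (u,z) \in L) &
     (forall u z, G u z -> u \notin A -> u \notin Er -> z \notin A -> z \notin Er -> (u,z) \in F)].

Definition mu (A Er : seq V) (F L : seq (V * V)) : nat :=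
  size L + count (fun f : V * V => (f.2 \notin A) && (f.2 \notin Er)) F.

Lemma count_add2 (T : Type) (q1 q2 p : pred T) (s : seq T) :
  (forall x, q1 x + q2 x <= p x) -> count q1 s + count q2 s <= count p s.
Proof.
move=> H; elim: s => //= x s IH.
rewrite addnACA; exact: leq_add (H x) IH.
Qed.

Lemma inv_add A Er F L' e :
  Inv A Er F (e :: L') ->
  Inv (e.1 :: A) Er [seq f <- F | f.1 != e.1]
   ([seq f <- L' | f.1 != e.1] ++ by_source [seq f <- [seq f <- F | f.1 != e.1] | f.2 == e.1]).
Proof.
move=> [Ha Hl Hf Hc Hd].
have [Gw wt wA wE] := Hl e (mem_head _ _).
split.
- move=> x xE; have [xA [z zA Gxz]] := Ha x xE.
  have xw : x != e.1 by apply: contraNneq wE => <-.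
  split; last by exists z; rewrite // in_cons zA orbT.
  by rewrite in_cons negb_or xA xw.
- move=> f; rewrite mem_cat mem_filter /by_source mem_sort mem_filter mem_filter.
  case/orP => [/andP [fw fL]| /andP [/eqP f2w /andP [fw fF]]].
  + have /Hl [G1 f2A f1A f1E] : f \in e :: L' by rewrite in_cons fL orbT.
    by split; rewrite // ?in_cons ?negb_or ?fw ?f1A ?f2A ?orbT.
  + have [G1 f1A f1E] := Hf f fF.
    by split; rewrite // ?f2w ?mem_head // in_cons negb_or fw f1A.
- move=> f; rewrite mem_filter => /andP [fw fF]; have [g1 h1 h2] := Hf f fF; by split; rewrite // in_cons negb_or fw h1.
- move=> u z Guz zA' uA' uE; move: uA'; rewrite in_cons negb_or => /andP [uw uA].
  move: zA'; rewrite in_cons => /orP [/eqP zw|zA].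
  + rewrite mem_cat; apply/orP; right.
    rewrite /by_source mem_sort mem_filter /= zw eqxx /= mem_filter /= uw /=.
    rewrite zw in Guz; exact: Hd.
  + rewrite mem_cat mem_filter uw /=.
    have := Hc u z Guz zA uA uE; rewrite in_cons => /orP [/eqP ue | ->//].
    by move: uw; rewrite -ue /= eqxx.
- move=> u z Guz uA' uE zA' zE.
  move: uA'; rewrite in_cons negb_or => /andP [uw uA].
  move: zA'; rewrite in_cons negb_or => /andP [zw zA].
  rewrite mem_filter uw /=; exact: Hd.
Qed.

Lemma inv_erase A Er F L' e :
  Inv A Er F (e :: L') ->
  Inv A (e.1 :: Er) [seq f <- F | (f.1 != e.1) && (f.2 != e.1)]
        [seq f <- L' | (f.1 != e.1) && (f.2 != e.1)].
Proof.
move=> [Ha Hl Hf Hc Hd].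
have [Gw wt wA wE] := Hl e (mem_head _ _).
split.
- move=> x; rewrite in_cons => /orP [/eqP -> | xE]; last exact: Ha.
  by split => //; exists e.2.
- move=> f; rewrite mem_filter => /andP [/andP [f1w f2w] fL].
  have /Hl [G1 f2A f1A f1E] : f \in e :: L' by rewrite in_cons fL orbT.
  by split; rewrite // in_cons negb_or f1w.
- move=> f; rewrite mem_filter => /andP [/andP [f1w f2w] fF].
  have [G1 f1A f1E] := Hf f fF.
  by split; rewrite // in_cons negb_or f1w.
- move=> u z Guz zA uA uE'; move: uE'; rewrite in_cons negb_or => /andP [uw uE].
  have := Hc u z Guz zA uA uE; rewrite in_cons => /orP [/eqP ue | uL].
    by move: uw; rewrite -ue /= eqxx.
  have zw : z != e.1 by apply: contraNneq wA => <-.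
  by rewrite mem_filter uw zw uL.
- move=> u z Guz uA uE' zA zE'.
  move: uE'; rewrite in_cons negb_or => /andP [uw uE].
  move: zE'; rewrite in_cons negb_or => /andP [zw zE].
  rewrite mem_filter uw zw /=; exact: Hd.
Qed.

Lemma mu_add A Er F L' e :
  Inv A Er F (e :: L') ->
  mu (e.1 :: A) Er [seq f <- F | f.1 != e.1]
   ([seq f <- L' | f.1 != e.1] ++ by_source [seq f <- [seq f <- F | f.1 != e.1] | f.2 == e.1])
  < mu A Er F (e :: L').
Proof.
move=> [Ha Hl Hf Hc Hd].
have [Gw wt wA wE] := Hl e (mem_head _ _).
rewrite /mu size_cat /by_source size_sort !size_filter /= -addnA addSn ltnS.
apply: leq_add; first exact: count_size.
rewrite !count_filter; apply: count_add2 => f /=.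
case: (eqVneq f.2 e.1) => [->|ne].
  by rewrite in_cons eqxx wA wE /=; case: (f.1 != e.1).
rewrite in_cons (negbTE ne) /=.
by case: (f.2 \in A); case: (f.2 \in Er); case: (f.1 != e.1).
Qed.

Lemma mu_erase A Er F L' e :
  mu A (e.1 :: Er) [seq f <- F | (f.1 != e.1) && (f.2 != e.1)]
        [seq f <- L' | (f.1 != e.1) && (f.2 != e.1)] < mu A Er F (e :: L').
Proof.
rewrite /mu size_filter /= addSn ltnS.
apply: leq_add; first exact: count_size.
rewrite count_filter; apply: sub_count => f /=; rewrite in_cons negb_or.
by case/andP=> [/andP[-> /andP[_ ->]] _].
Qed.

Lemma explore_aux_spec n A Er F L :
  Inv A Er F L -> mu A Er F L < n ->
  forall x, x \in (explore_aux b n A F L Er).2 <->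
    x \notin (explore_aux b n A F L Er).1 /\
    exists2 z, z \in (explore_aux b n A F L Er).1 & G x z.
Proof.
elim: n A Er F L => [//|n IH] A Er F L Hinv Hmu.
case: L Hinv Hmu => [|e L'] Hinv Hmu.
- move=> x /=; case: Hinv => Ha _ _ Hc _; split; first exact: Ha.
  case=> xA [z zA Gxz]; case xE: (x \in Er) => //.
  by have := Hc x z Gxz zA xA (negbT xE); rewrite in_nil.
- rewrite /=; case: ifP => hb.
  + apply: IH; first exact: inv_add.
    by apply: leq_trans (mu_add Hinv) _; rewrite -ltnS.
  + apply: IH; first exact: inv_erase.
    by apply: leq_trans (mu_erase _ _ _ _ _) _; rewrite -ltnS.
Qed.

End Pf.

Lemma mem_edges (d : Order.disp_t) (V : finOrderType d) (G : rel V) (e : V * V) :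
  (e \in edges G) = G e.1 e.2.
Proof. by rewrite mem_filter mem_enum andbT. Qed.

Theorem lemma4p3 (d : Order.disp_t) (V : finOrderType d) (G : rel V)
    (Gsimple : simple_digraph G) (Gsc : strongly_connected G)
    (b : rel V) (v : V) (Hb : spanning_tree G b v) :
  erased G b v = boundary G (phi G b v).
Proof.
have Hinv : Inv G [:: v] [::] [seq e <- edges G | e.1 != v]
    (by_source [seq e <- edges G | e.2 == v]).
  split.
  - by [].
  - move=> e; rewrite /by_source mem_sort mem_filter mem_edges => /andP [/eqP e2 Ge].
    split => //; first by rewrite e2 mem_head.
    rewrite in_cons in_nil orbF; apply/eqP => e1; move: Ge; rewrite e1 e2 Gsimple.
    by [].
  - by move=> e; rewrite mem_filter mem_edges => /andP [e1 Ge]; rewrite in_cons in_nil orbF.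
  - move=> u z Guz; rewrite in_cons in_nil orbF => /eqP zv _ _.
    by rewrite /by_source mem_sort mem_filter mem_edges /= zv eqxx -zv.
  - move=> u z Guz; rewrite in_cons in_nil orbF => uv _ _ _.
    by rewrite mem_filter mem_edges /= uv.
have Hmu : mu [:: v] [::] [seq e <- edges G | e.1 != v]
    (by_source [seq e <- edges G | e.2 == v]) < (#|V| * #|V|).+1.
  rewrite ltnS /mu /by_source size_sort (size_filter _ (edges G)) (count_filter _ _ (edges G)).
  apply: (leq_trans (@count_add2 _ _ _ predT _ _)).

    by move=> f /=; rewrite !in_cons !in_nil /=; case: (f.2 == v); case: (f.1 != v).
  rewrite count_predT /edges size_filter; apply: leq_trans (count_size _ _) _.
  by rewrite -cardE card_prod.
have H := explore_aux_spec b Hinv Hmu.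
apply/setP => x; rewrite /erased /phi /boundary /explore !inE.
apply/idP/andP => [/H [xA [z zA Gxz]] | [xA /existsP [z /andP [zA Gxz]]]].
  split => //.
  by apply/existsP; exists z; rewrite inE zA.
by apply/H; split => //; exists z; rewrite // inE in zA.
Qed.
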